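(* Let $\mathcal R$ be a reaction network and let $\mathcal U=\mathcal U_1\cup\mathcal U_2\subseteq\mathcal S$ be a set of non-interacting species with $\mathcal U_1\cap\mathcal U_2=\emptyset$. Assume $\mathcal U_1$ is eliminable in $\mathcal R$ with respect to some $\mathcal F_1\subseteq\mathcal R_{\mathcal U_1}$, and that $\mathcal U_2$ is eliminable in the reduced network $\widetilde{\mathcal R}=\mathcal R^*_{\mathcal U_1,\mathcal F_1}$ with respect to $\mathcal F_2=\widetilde{\mathcal R}_{\mathcal U_2}$. Then $\mathcal U$ is eliminable in $\mathcal R$ with respect to $\mathcal F=\mathcal F_1\cup\mathcal R_{\mathcal U_2}$.
   Context: Species $S_1,\dots,S_n$ are the unit vectors of $\mathbb{N}_0^n$ and $\mathcal S=\{S_1,\dots,S_n\}$; for $x\in\mathbb{N}_0^n$, $\mathrm{supp}(x)=\{S_k: x^k>0\}$. A reaction network (RN) is a (possibly infinite) subset $\mathcal R\subseteq\mathbb{N}_0^n\times\mathbb{N}_0^n$ containing no $(y,y')$ with $y=y'$; elements $(y,y')$ are reactions $y\to y'$ with reactant $y$ and product $y'$. For $r_1=(y_1,y_1'),\ r_2=(y_2,y_2')$ define $r_1\oplus r_2=(y_1+0\vee(y_2-y_1'),\ y_2'+0\vee(y_1'-y_2))$ ($\vee$ componentwise maximum); it is associative. $\mathrm{cl}(A)$ is the set of all finite $\oplus$-sums of elements of $A$, including $(0,0)$. $(y_1,y_1')\sim(0,0)$ means $y_1=y_1'$. For $\mathcal U\subseteq\mathcal S$ and a set $B\subseteq\mathbb{N}_0^n\times\mathbb{N}_0^n$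 write $B_{\mathcal U}=\{(y,y')\in B:\mathrm{supp}(y)\cap\mathcal U\neq\emptyset\}$ and $B_{\mathcal U}'=\{(y,y')\in B:\mathrm{supp}(y')\cap\mathcal U\neq\emptyset\}$. For an RN $\mathcal R$ and $\mathcal U$, set $\overline{\mathcal R}=\mathrm{cl}(\mathcal R)$, $\mathcal R_0=\mathcal R\setminus(\mathcal R_{\mathcal U}\cup\mathcal R_{\mathcal U}')$ and $\overline{\mathcal R}_0=\overline{\mathcal R}\setminus(\overline{\mathcal R}_{\mathcal U}\cup\overline{\mathcal R}_{\mathcal U}')$. $\mathcal U$ is eliminable in $\mathcal R$ with respect to $\mathcal F\subseteq\mathcal R_{\mathcal U}$ if for every $r_0\in\mathcal R_{\mathcal U}'$ and every $r_1\in\mathrm{cl}(\mathcal F)$ with $r_0\oplus r_1\notin\overline{\mathcal R}_{\mathcal U}$ there exists $r_2\in\mathrm{cl}(\mathcal F)$ with $r_0\oplus r_1\oplus r_2\in\overline{\mathcal R}_0$. In that case the reduced RN is $\mathcal R^*_{\mathcal U,\mathcal F}=\mathcal R_0\cup\mathcal R_{\mathcal U,\mathcal F}$, where $\mathcal R_{\mathcal U,\mathcal F}=\{r_0\oplus r_1\in\overline{\mathcal R}_0: r_0\in\mathcal R_{\mathcal U}',\ r_1\in\mathrm{cl}(\mathcal F)\}\setminus\{r: r\sim(0,0)\}$. $\mathcal U$ consists of non-interacting species (in $\mathcal R$) if for every reaction $y\to y'\in\mathcal R$, $\sum_{S_i\in\mathcal U}y^i\le1$ and $\sum_{S_i\in\mathcal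 U}(y')^i\le1$. *)

(* Defs.v *)
From mathcomp Require Import all_boot all_order.
Set Implicit Arguments. Unset Strict Implicit. Unset Printing Implicit Defensive.

(* Complexes: elements of N_0^n, species are indices i : 'I_n. *)
Definition vec (n : nat) := {ffun 'I_n -> nat}.
Definition reaction (n : nat) := (vec n * vec n)%type.
Definition rset (n : nat) := reaction n -> Prop.

Definition vzero (n : nat) : vec n := [ffun _ => 0%N].

Definition is_RN n (R : rset n) : Prop := forall r, R r -> r.1 <> r.2.

(* r1 (+) r2 = (y1 + 0 v (y2 - y1'), y2' + 0 v (y1' - y2)); truncated nat
   subtraction is exactly 0 v (a - b). *)
Definition oplus n (r1 r2 : reaction n) : reaction n :=
  ([ffun i => r1.1 i + (r2.1 i - r1.2 i)]%N,
   [ffun i => r2.2 i + (r1.2 i - r2.1 i)]%N).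

Inductive cl n (A : rset n) : rset n :=
| cl_zero : cl A (vzero n, vzero n)
| cl_add : forall r a, cl A r -> A a -> cl A (oplus r a).

Definition equiv0 n (r : reaction n) : Prop := r.1 = r.2.

Definition meets n (U : {set 'I_n}) (x : vec n) : Prop :=
  exists2 i, i \in U & (0 < x i)%N.

Definition subU n (B : rset n) (U : {set 'I_n}) : rset n :=
  fun r => B r /\ meets U r.1.
Definition subU' n (B : rset n) (U : {set 'I_n}) : rset n :=
  fun r => B r /\ meets U r.2.

Definition sub0 n (B : rset n) (U : {set 'I_n}) : rset n :=
  fun r => B r /\ ~ subU B U r /\ ~ subU' B U r.

Definition R0 n (R : rset n) U := sub0 R U.
Definition Rbar0 n (R : rset n) U := sub0 (cl R) U.

Definition eliminable n (R : rset n) (U : {set 'I_n}) (F : rset n) : Prop :=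
  (forall r, F r -> subU R U r) /\
  forall r0 r1, subU' R U r0 -> cl F r1 ->
    ~ subU (cl R) U (oplus r0 r1) ->
    exists2 r2, cl F r2 & Rbar0 R U (oplus (oplus r0 r1) r2).

Definition R_UF n (R : rset n) (U : {set 'I_n}) (F : rset n) : rset n :=
  fun r => (exists r0 r1, subU' R U r0 /\ cl F r1 /\ r = oplus r0 r1)
           /\ Rbar0 R U r /\ ~ equiv0 r.

Definition reduced n (R : rset n) (U : {set 'I_n}) (F : rset n) : rset n :=
  fun r => R0 R U r \/ R_UF R U F r.

Definition non_interacting n (R : rset n) (U : {set 'I_n}) : Prop :=
  forall r, R r -> (\sum_(i in U) r.1 i <= 1)%N /\ (\sum_(i in U) r.2 i <= 1)%N.

Definition runion n (A B : rset n) : rset n := fun r => A r \/ B r.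

(* Main.v *)
Require Import Defs.
From mathcomp Require Import all_boot all_order.
From mathcomp Require Import zify.
Set Implicit Arguments. Unset Strict Implicit. Unset Printing Implicit Defensive.

Lemma oplus1E n (a b : reaction n) i : (oplus a b).1 i = (a.1 i + (b.1 i - a.2 i))%N.
Proof. by rewrite /oplus ffunE. Qed.
Lemma oplus2E n (a b : reaction n) i : (oplus a b).2 i = (b.2 i + (a.2 i - b.1 i))%N.
Proof. by rewrite /oplus ffunE. Qed.

Lemma reqP n (a b : reaction n) : (forall i, a.1 i = b.1 i) -> (forall i, a.2 i = b.2 i) -> a = b.
Proof.
case: a b => [a1 a2] [b1 b2] /= h1 h2.
by move/ffunP: h1 => ->; move/ffunP: h2 => ->.
Qed.

Lemma oplusA n (a b c : reaction n) : oplus (oplus a b) c = oplus a (oplus b c).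
Proof. apply: reqP => i; rewrite !(oplus1E, oplus2E); lia. Qed.

Lemma oplus0r n (a : reaction n) : oplus a (vzero n, vzero n) = a.
Proof. apply: reqP => i; rewrite !(oplus1E, oplus2E) /vzero /= ffunE; lia. Qed.

Lemma oplus0l n (a : reaction n) : oplus (vzero n, vzero n) a = a.
Proof. apply: reqP => i; rewrite !(oplus1E, oplus2E) /vzero /= ffunE; lia. Qed.

Lemma cl_single n (A : rset n) a : A a -> cl A a.
Proof. by move=> h; rewrite -(oplus0l a); apply: cl_add => //; apply: cl_zero. Qed.

Lemma cl_op n (A : rset n) x y : cl A x -> cl A y -> cl A (oplus x y).
Proof.
move=> hx; elim => [|r a _ IH ha]; first by rewrite oplus0r.
by rewrite -oplusA; apply: cl_add.
Qed.

Lemma cl_gen n (A B : rset n) x : (forall r, A r -> cl B r) -> cl A x -> cl B x.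
Proof.
move=> h; elim => [|r a _ IH ha]; first exact: cl_zero.
by apply: cl_op => //; apply: h.
Qed.

Lemma cl_mono n (A B : rset n) x : (forall r, A r -> B r) -> cl A x -> cl B x.
Proof. by move=> h; apply: cl_gen => r /h; apply: cl_single. Qed.

Definition avoid n (A : {set 'I_n}) (x : vec n) := forall i, i \in A -> x i = 0%N.
Definition isu n (A : {set 'I_n}) (x : vec n) (w : 'I_n) :=
  forall i, i \in A -> x i = nat_of_bool (i == w).

Lemma avoidP n (A : {set 'I_n}) x : ~ meets A x <-> avoid A x.
Proof.
split.
- move=> h i iA; case E: (x i) => [//|k]; exfalso; apply: h; exists i => //; by rewrite E.
- by move=> h [i iA]; rewrite h.
Qed.

Lemma sum_le1 n (A : {set 'I_n}) (x : vec n) :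
  (\sum_(i in A) x i <= 1)%N -> avoid A x \/ exists2 w, w \in A & isu A x w.
Proof.
move=> hs; case: (boolP [exists i in A, 0 < x i]%N).
- move/existsP => [w /andP[wA pos]]; right; exists w => // i iA.
  move: hs; rewrite (bigD1 w) //=.
  case: (eqVneq i w) => [->|ne] /=; first lia.
  rewrite (bigD1 i) /=; last by rewrite iA ne.
  lia.
- move=> h; left => i iA; apply/eqP; rewrite -leqn0 leqNgt; apply/negP => p.
  by move: h; rewrite negb_exists => /forallP /(_ i); rewrite iA p.
Qed.

Lemma isu_r2 n (U1 U2 : {set 'I_n}) x w : isu (U1 :|: U2) x w -> isu U2 x w.
Proof. by move=> h i iU; apply: h; rewrite in_setU iU orbT. Qed.
Lemma isu_r1 n (U1 U2 : {set 'I_n}) x w : isu (U1 :|: U2) x w -> isu U1 x w.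
Proof. by move=> h i iU; apply: h; rewrite in_setU iU. Qed.
Lemma isu_av1 n (U1 U2 : {set 'I_n}) x w : [disjoint U1 & U2] ->
  isu (U1 :|: U2) x w -> w \in U2 -> avoid U1 x.
Proof.
move=> hd h wU i iU; rewrite h ?in_setU ?iU //.
case: (eqVneq i w) => // e; by move: wU; rewrite -e (disjointFr hd iU).
Qed.
Lemma isu_av2 n (U1 U2 : {set 'I_n}) x w : [disjoint U1 & U2] ->
  isu (U1 :|: U2) x w -> w \in U1 -> avoid U2 x.
Proof.
move=> hd h wU i iU; rewrite h ?in_setU ?iU ?orbT //.
case: (eqVneq i w) => // e; by move: iU; rewrite e (disjointFr hd wU).
Qed.
Lemma isu_meets n (A : {set 'I_n}) x w : isu A x w -> w \in A -> meets A x.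
Proof. by move=> h wA; exists w => //; rewrite h // eqxx. Qed.
Lemma isu_inj n (A : {set 'I_n}) x w v : isu A x w -> isu A x v -> w \in A -> w = v.
Proof. move=> h1 h2 wA; move: (h2 w wA); rewrite h1 // eqxx; by case: eqP. Qed.

Definition Reach2 n (R : rset n) U1 U2 F1 (v : 'I_n) :=
  exists r0 r1, subU' (reduced R U1 F1) U2 r0 /\ cl (subU (reduced R U1 F1) U2) r1 /\
    avoid U2 (oplus r0 r1).1 /\ isu U2 (oplus r0 r1).2 v.

Lemma close_lem n (R : rset n) (U1 U2 : {set 'I_n}) (F1 : rset n) b run u :
  [disjoint U1 & U2] -> (forall r, F1 r -> subU R U1 r) ->
  R b -> meets U1 b.2 -> cl F1 run -> avoid U1 (oplus b run).1 ->
  isu (U1:|:U2) (oplus b run).2 u -> u \in U2 ->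
  (avoid U2 (oplus b run).1 \/ exists2 v, v \in U2 & isu U2 (oplus b run).1 v /\ Reach2 R U1 U2 F1 v) ->
  Reach2 R U1 U2 F1 u.
Proof.
move=> hd hF1 Rb mb crun av1 isM uU2 hc.
set M := oplus b run in av1 isM hc *.
have Mcl : cl R M.
  apply: cl_op; first exact: cl_single.
  by apply: cl_mono crun => r /hF1 [].
have M2U1 : avoid U1 M.2 by apply: isu_av1 isM uU2.
have MRb : Rbar0 R U1 M.
  split=> //; split; first by case=> _; apply/avoidP.
  by case=> _; apply/avoidP.
have MRt : ~ equiv0 M -> reduced R U1 F1 M.
  move=> ne; right; split; last by split.
  by exists b, run.
have M2 := isu_r2 isM.
case: hc => [a2|[v vU2 [iv [r0 [r1 [h0 [h1 [h2 h3]]]]]]]].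
- have ne : ~ equiv0 M.
    move=> e; move: (a2 u uU2); rewrite /equiv0 in e; rewrite e M2 // eqxx //.
  exists M, (vzero n, vzero n); rewrite oplus0r; split; last split => //.
    by split; [apply: MRt | apply: isu_meets M2 uU2].
  exact: cl_zero.
- case: (eqVneq M.1 M.2) => [e|ne].
    have -> : u = v.
      apply: (isu_inj (A:=U2) (x := M.2)) => //; by rewrite -e.
    by exists r0, r1.
  have ne' : ~ equiv0 M by move=> e; move: ne; rewrite e eqxx.
  exists r0, (oplus r1 M); split => //; split.
    apply: cl_add => //; split; first exact: MRt.
    exact: isu_meets iv vU2.
  rewrite -oplusA; split => i iU.
    by rewrite oplus1E h2 // iv // h3 //; lia.
  by rewrite oplus2E M2 // iv // h3 //; lia.
Qed.

Definition Pend1 n (R : rset n) (U1 U2 : {set 'I_n}) (F1 : rset n) (w : 'I_n) :=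
  exists b run, R b /\ meets U1 b.2 /\ cl F1 run /\ avoid U1 (oplus b run).1 /\
    isu (U1:|:U2) (oplus b run).2 w /\
    (avoid U2 (oplus b run).1 \/
     exists2 v, v \in U2 & isu U2 (oplus b run).1 v /\ Reach2 R U1 U2 F1 v).

Definition State n (R : rset n) (U1 U2 : {set 'I_n}) (F1 : rset n) (C : reaction n) :=
  avoid (U1:|:U2) C.2 \/
  (exists2 v, v \in U2 & isu (U1:|:U2) C.2 v /\ Reach2 R U1 U2 F1 v) \/
  (exists2 w, w \in U1 & isu (U1:|:U2) C.2 w /\ Pend1 R U1 U2 F1 w).

Lemma avoid_ext n (A : {set 'I_n}) (x y : vec n) : (forall i, i \in A -> x i = y i) -> avoid A y -> avoid A x.
Proof. by move=> e h i iA; rewrite e // h. Qed.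
Lemma isu_ext n (A : {set 'I_n}) (x y : vec n) w : (forall i, i \in A -> x i = y i) -> isu A y w -> isu A x w.
Proof. by move=> e h i iA; rewrite e // h. Qed.
Lemma meetsU1 n (U1 U2 : {set 'I_n}) x : meets U1 x -> meets (U1 :|: U2) x.
Proof. by case=> i iU p; exists i => //; rewrite in_setU iU. Qed.
Lemma meetsU2 n (U1 U2 : {set 'I_n}) x : meets U2 x -> meets (U1 :|: U2) x.
Proof. by case=> i iU p; exists i => //; rewrite in_setU iU orbT. Qed.

Lemma NI1 n (R : rset n) (U : {set 'I_n}) a : non_interacting R U -> R a ->
  meets U a.1 -> exists2 u, u \in U & isu U a.1 u.
Proof.
move=> hNI Ra m; case: (sum_le1 (hNI a Ra).1) => // h.
by move/avoidP: h.
Qed.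
Lemma NI2 n (R : rset n) (U : {set 'I_n}) a : non_interacting R U -> R a ->
  avoid U a.2 \/ exists2 u, u \in U & isu U a.2 u.
Proof. by move=> hNI Ra; apply: sum_le1 (hNI a Ra).2. Qed.

Lemma isu_meets_in n (A B : {set 'I_n}) x w : isu A x w -> B \subset A -> meets B x -> w \in B.
Proof.
move=> h sub [i iB p]; move: p; rewrite h ?(subsetP sub) //.
by case: (eqVneq i w) => [<-|].

Qed.

Lemma step_lem n (R : rset n) (U1 U2 : {set 'I_n}) (F1 : rset n) C a :
  [disjoint U1 & U2] -> (forall r, F1 r -> subU R U1 r) ->
  non_interacting R (U1 :|: U2) ->
  State R U1 U2 F1 C -> runion F1 (subU R U2) a ->
  (forall i, i \in U1 :|: U2 -> a.1 i <= C.2 i)%N ->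
  State R U1 U2 F1 (oplus C a).
Proof.
move=> hd hF1 hNI hS hFa hle.
have Ra : R a by case: hFa => [/hF1|] [].
have ma : meets (U1 :|: U2) a.1 by case: hFa => [/hF1|] [] _; [apply: meetsU1|apply: meetsU2].
have [u uU ia1] := NI1 hNI Ra ma.
have hw : forall w, isu (U1:|:U2) C.2 w ->
   u = w /\ forall i, i \in U1 :|: U2 -> (oplus C a).2 i = a.2 i /\ (oplus C a).1 i = C.1 i.
  move=> w iw; have uw : u = w.
    move: (hle u uU); rewrite ia1 // iw // eqxx; by case: eqP.
  split => // i iU; rewrite oplus2E oplus1E ia1 // iw // -uw; lia.
case: hS => [av|[[v vU2 [iv R2]]|[w wU1 [iw P1]]]].
- by move: (hle u uU); rewrite ia1 // av // eqxx.
- have [uw e] := hw v iv.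
  have aU2 : subU R U2 a.
    case: hFa => // /hF1 [_ m1]; have := isu_meets_in ia1 (subsetUl U1 U2) m1.
    by rewrite uw (disjointFl hd vU2).
  have a1U1 : avoid U1 a.1 by apply: (isu_av1 hd ia1); rewrite uw.
  case: (NI2 hNI Ra) => [a2|[u' u'U ia2]].
    by left; apply: avoid_ext a2 => i /e [].
  have pe : isu (U1:|:U2) (oplus C a).2 u' by apply: isu_ext ia2 => i /e [].
  case/setUP: u'U => u'U.
  + right; right; exists u' => //; split => //.
    exists a, (vzero n, vzero n); rewrite oplus0r; split => //; split.
      exact: isu_meets (isu_r1 ia2) u'U.
    split; first exact: cl_zero.
    split => //; split => //; right; exists v => //; split => //.
    by rewrite -uw; exact: (isu_r2 ia1).
  + right; left; exists u' => //; split => //.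
    case: R2 => r0 [r1 [h0 [h1 [h2 h3]]]].
    have Fa : subU (reduced R U1 F1) U2 a.
      split; last by case: aU2.
      left; split => //; split; first by case=> _; apply/avoidP.
      by case=> _; apply/avoidP; apply: (isu_av1 hd ia2 u'U).
    exists r0, (oplus r1 a); split => //; split; first exact: cl_add.
    rewrite -oplusA; split => i iU.
      by rewrite oplus1E h2 // (isu_r2 ia1) // h3 // uw; lia.
    have iU' : i \in U1 :|: U2 by rewrite in_setU iU orbT.
    by rewrite oplus2E ia2 // h3 // (isu_r2 ia1) // uw; lia.
- have [uw e] := hw w iw.
  have aF1 : F1 a.
    case: hFa => // [[_ m2]]; have := isu_meets_in ia1 (subsetUr U1 U2) m2.
    by rewrite uw (disjointFr hd wU1).
  case: P1 => b [run [Rb [mb [crun [av1 [isX hc]]]]]].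
  have e1 : forall i, i \in U1 :|: U2 -> (oplus (oplus b run) a).1 i = (oplus b run).1 i.
    by move=> i iU; rewrite oplus1E ia1 // isX // uw; lia.
  have e2 : forall i, i \in U1 :|: U2 -> (oplus (oplus b run) a).2 i = a.2 i.
    by move=> i iU; rewrite oplus2E ia1 // isX // uw; lia.
  have e1' : forall i, i \in U1 -> (oplus (oplus b run) a).1 i = (oplus b run).1 i.
    by move=> i iU; apply: e1; rewrite in_setU iU.
  have e2' : forall i, i \in U2 -> (oplus (oplus b run) a).1 i = (oplus b run).1 i.
    by move=> i iU; apply: e1; rewrite in_setU iU orbT.
  have crun' : cl F1 (oplus run a) by apply: cl_add.
  have av1' : avoid U1 (oplus b (oplus run a)).1 by rewrite -oplusA; apply: avoid_ext av1.
  have hc' : avoid U2 (oplus b (oplus run a)).1 \/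
     exists2 v, v \in U2 & isu U2 (oplus b (oplus run a)).1 v /\ Reach2 R U1 U2 F1 v.
    rewrite -oplusA; case: hc => [h|[v vU [iv R2]]]; first by left; apply: avoid_ext h.
    by right; exists v => //; split => //; apply: isu_ext iv.
  case: (NI2 hNI Ra) => [a2|[u' u'U ia2]].
    by left; apply: avoid_ext a2 => i /e [].
  have pe : isu (U1:|:U2) (oplus C a).2 u' by apply: isu_ext ia2 => i /e [].
  have pX : isu (U1:|:U2) (oplus b (oplus run a)).2 u' by rewrite -oplusA; apply: isu_ext ia2.
  case/setUP: u'U => u'U.
  + right; right; exists u' => //; split => //.
    by exists b, (oplus run a).
  + right; left; exists u' => //; split => //.
    exact: (close_lem hd hF1 Rb mb crun' av1' pX u'U hc').
Qed.

Lemma chain_lem n (R : rset n) (U1 U2 : {set 'I_n}) (F1 : rset n) C r :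
  [disjoint U1 & U2] -> (forall r, F1 r -> subU R U1 r) ->
  non_interacting R (U1 :|: U2) ->
  State R U1 U2 F1 C -> cl (runion F1 (subU R U2)) r ->
  (forall i, i \in U1 :|: U2 -> (oplus C r).1 i = C.1 i) ->
  State R U1 U2 F1 (oplus C r).
Proof.
move=> hd hF1 hNI hS; elim => [|r' a cr IH ha] he; first by rewrite oplus0r.
move: he; rewrite -oplusA => he.
have he' : forall i, i \in U1 :|: U2 -> (oplus C r').1 i = C.1 i.
  move=> i iU; move: (he i iU); rewrite !oplus1E; lia.
apply: (step_lem hd hF1 hNI (IH he') ha) => i iU.
move: (he i iU) (he' i iU); rewrite !oplus1E; lia.
Qed.

Lemma clF1_avU2 n (R : rset n) (U1 U2 : {set 'I_n}) (F1 : rset n) x :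
  [disjoint U1 & U2] -> (forall r, F1 r -> subU R U1 r) ->
  non_interacting R (U1 :|: U2) -> cl F1 x -> avoid U2 x.1.
Proof.
move=> hd hF1 hNI; elim => [|c a _ IH ha] i iU; first by rewrite /vzero /= ffunE.
rewrite oplus1E IH //.
have [Ra m] := hF1 a ha.
have [u uU ia] := NI1 hNI Ra (meetsU1 U2 m).
have uU1 := isu_meets_in ia (subsetUl U1 U2) m.
by rewrite (isu_av2 hd ia uU1).
Qed.

Lemma Rt_av n (R : rset n) (U1 : {set 'I_n}) (F1 : rset n) r :
  reduced R U1 F1 r -> avoid U1 r.1 /\ avoid U1 r.2.
Proof.
case=> [[Rr [h1 h2]]|[_ [[cr [h1 h2]] _]]]; split; apply/avoidP => m.
- by apply: h1. - by apply: h2. - by apply: h1. - by apply: h2.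
Qed.

Lemma clRt_av n (R : rset n) (U1 : {set 'I_n}) (F1 : rset n) x :
  cl (reduced R U1 F1) x -> avoid U1 x.1 /\ avoid U1 x.2.
Proof.
elim => [|c a _ [IH1 IH2] /Rt_av [h1 h2]]; first by split => i _; rewrite /vzero /= ffunE.
by split => i iU; [rewrite oplus1E IH1 // h1 | rewrite oplus2E IH2 // h2].
Qed.

Lemma F2_clF n (R : rset n) (U1 U2 : {set 'I_n}) (F1 : rset n) r :
  [disjoint U1 & U2] -> (forall r, F1 r -> subU R U1 r) ->
  non_interacting R (U1 :|: U2) ->
  subU (reduced R U1 F1) U2 r -> cl (runion F1 (subU R U2)) r.
Proof.
move=> hd hF1 hNI [[[Rr _]|[[r0 [r1 [[R0 m0] [c1 ->]]] _]]] m].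
- by apply: cl_single; right.
- apply: cl_op.
    apply: cl_single; right; split => //.
    case: m => i iU p; exists i => //; move: p.
    by rewrite oplus1E (clF1_avU2 hd hF1 hNI c1) // addn0.
  by apply: cl_mono c1 => x hx; left.
Qed.

Lemma good_lem n (R : rset n) (U1 U2 : {set 'I_n}) (F1 : rset n) v :
  [disjoint U1 & U2] -> (forall r, F1 r -> subU R U1 r) ->
  non_interacting R (U1 :|: U2) ->
  eliminable (reduced R U1 F1) U2 (subU (reduced R U1 F1) U2) ->
  v \in U2 -> Reach2 R U1 U2 F1 v ->
  exists2 r3, cl (runion F1 (subU R U2)) r3 &
     isu (U1 :|: U2) r3.1 v /\ avoid (U1 :|: U2) r3.2.
Proof.
move=> hd hF1 hNI [_ hE2] vU [r0 [r1 [h0 [h1 [h2 h3]]]]].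
have [|r2 c2 [cZ [n1 n2]]] := hE2 r0 r1 h0 h1.
  by case=> _; apply/avoidP.
have z1 : avoid U2 (oplus (oplus r0 r1) r2).1 by apply/avoidP => m; apply: n1.
have z2 : avoid U2 (oplus (oplus r0 r1) r2).2 by apply/avoidP => m; apply: n2.
have [a1 a2] := clRt_av (cl_mono (fun r (h : subU _ U2 r) => h.1) c2).
exists r2; first exact: cl_gen (fun r => F2_clF hd hF1 hNI) c2.
split => i /setUP [iU|iU].
- rewrite a1 //; case: (eqVneq i v) => // e; by move: vU; rewrite -e (disjointFr hd iU).
- move: (z1 i iU) (z2 i iU); rewrite (oplus1E (oplus r0 r1)) (oplus2E (oplus r0 r1)) h2 // h3 //.
  case: (i == v) => /=; lia.
- by rewrite a2.
- move: (z1 i iU) (z2 i iU); rewrite (oplus1E (oplus r0 r1)) (oplus2E (oplus r0 r1)) h2 // h3 //.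
  case: (i == v) => /=; lia.
Qed.

Lemma fin2 n (R : rset n) (U1 U2 : {set 'I_n}) (F1 : rset n) C :
  [disjoint U1 & U2] -> (forall r, F1 r -> subU R U1 r) ->
  non_interacting R (U1 :|: U2) ->
  eliminable (reduced R U1 F1) U2 (subU (reduced R U1 F1) U2) ->
  (avoid (U1:|:U2) C.2 \/
   exists2 v, v \in U2 & isu (U1:|:U2) C.2 v /\ Reach2 R U1 U2 F1 v) ->
  exists2 r2, cl (runion F1 (subU R U2)) r2 &
    (forall i, i \in U1 :|: U2 -> (oplus C r2).1 i = C.1 i) /\
    avoid (U1 :|: U2) (oplus C r2).2.
Proof.
move=> hd hF1 hNI hE2 [av|[v vU [iv R2]]].
  by exists (vzero n, vzero n); [exact: cl_zero | rewrite oplus0r].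
have [r3 c3 [i3 a3]] := good_lem hd hF1 hNI hE2 vU R2.
exists r3 => //; split => i iU.
  rewrite oplus1E i3 // iv //; lia.
by rewrite oplus2E a3 // i3 // iv // subnn.
Qed.

Lemma fin_lem n (R : rset n) (U1 U2 : {set 'I_n}) (F1 : rset n) C :
  [disjoint U1 & U2] -> (forall r, F1 r -> subU R U1 r) ->
  non_interacting R (U1 :|: U2) ->
  eliminable R U1 F1 ->
  eliminable (reduced R U1 F1) U2 (subU (reduced R U1 F1) U2) ->
  State R U1 U2 F1 C ->
  exists2 r2, cl (runion F1 (subU R U2)) r2 &
    (forall i, i \in U1 :|: U2 -> (oplus C r2).1 i = C.1 i) /\
    avoid (U1 :|: U2) (oplus C r2).2.
Proof.
move=> hd hF1 hNI [_ hE1] hE2 hS.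
case: hS => [h|[h|[w wU1 [iw P1]]]].
- by apply: (fin2 hd hF1 hNI hE2); left.
- by apply: (fin2 hd hF1 hNI hE2); right.
case: P1 => b [run [Rb [mb [crun [av1 [isX hc]]]]]].
have F1R : forall r, F1 r -> R r by move=> r /hF1 [].
have [|r2 c2 [cZ [n1 n2]]] := hE1 b run (conj Rb mb) crun.
  by case=> _; apply/avoidP.
have clZ : cl R (oplus (oplus b run) r2).
  apply: cl_op; [apply: cl_op; [exact: cl_single|] |]; exact: cl_mono F1R _.
have z1 : avoid U1 (oplus (oplus b run) r2).1 by apply/avoidP => m; apply: n1.
have z2 : avoid U1 (oplus (oplus b run) r2).2 by apply/avoidP => m; apply: n2.
have r2U2 := clF1_avU2 hd hF1 hNI c2.
have c2F : cl (runion F1 (subU R U2)) r2 by apply: cl_mono c2 => x hx; left.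
have he : forall i, i \in U1 :|: U2 -> (oplus C r2).1 i = C.1 i.
  move=> i /setUP [iU|iU]; last by rewrite oplus1E r2U2 // addn0.
  have iU' : i \in U1 :|: U2 by rewrite in_setU iU.
  move: (z1 i iU); rewrite oplus1E (oplus1E C) iw // (isX i iU'); lia.
have S2 := chain_lem hd hF1 hNI (or_intror (or_intror (ex_intro2 _ _ w wU1 (conj iw
   (ex_intro _ b (ex_intro _ run (conj Rb (conj mb (conj crun (conj av1 (conj isX hc))))))))))) c2F he.
have p1 : avoid U1 (oplus C r2).2.
  move=> i iU; have iU' : i \in U1 :|: U2 by rewrite in_setU iU.
  by move: (z2 i iU); rewrite (oplus2E (oplus b run)) (oplus2E C) iw // (isX i iU').
have [r3 c3 [e3 a3]] : exists2 r3, cl (runion F1 (subU R U2)) r3 &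
    (forall i, i \in U1 :|: U2 -> (oplus (oplus C r2) r3).1 i = (oplus C r2).1 i) /\
    avoid (U1 :|: U2) (oplus (oplus C r2) r3).2.
  apply: fin2 => //; case: S2 => [h|[h|[w' w'U [iw' _]]]]; [by left|by right|].
  by move: (p1 w' w'U); rewrite iw' ?eqxx // in_setU w'U.
exists (oplus r2 r3); first exact: cl_op.
rewrite -oplusA; split => // i iU; by rewrite e3 // he.
Qed.

Theorem proposition4p10 (n : nat) (R : rset n) (U1 U2 : {set 'I_n})
    (F1 : rset n) :
  is_RN R ->
  non_interacting R (U1 :|: U2) ->
  [disjoint U1 & U2] ->
  (forall r, F1 r -> subU R U1 r) ->
  eliminable R U1 F1 ->
  eliminable (reduced R U1 F1) U2 (subU (reduced R U1 F1) U2) ->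
  eliminable R (U1 :|: U2) (runion F1 (subU R U2)).
Proof.
move=> _ hNI hd hF1 hE1 hE2.
have FR : forall r, runion F1 (subU R U2) r -> R r by move=> r [/hF1|] [].
split.
  move=> r [/hF1 [Rr m]|[Rr m]]; split => //; [exact: meetsU1|exact: meetsU2].
move=> r0 r1 [Rr0 m0] c1 hn.
set C := oplus r0 r1.
have clC : cl R C by apply: cl_op; [exact: cl_single | exact: cl_mono FR _].
have aC : avoid (U1 :|: U2) C.1 by apply/avoidP => m; apply: hn.
have a0 : avoid (U1 :|: U2) r0.1.
  by move=> i iU; move: (aC i iU); rewrite oplus1E; lia.
case: (NI2 hNI Rr0) => [av|[u uU iu]]; first by move/avoidP: av.
have S0 : State R U1 U2 F1 r0.
  right; case/setUP: (uU) => uU'.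
  - right; exists u => //; split => //.
    exists r0, (vzero n, vzero n); rewrite oplus0r; split => //.
    split; first exact: isu_meets (isu_r1 iu) uU'.
    split; first exact: cl_zero.
    split; first by move=> i iU; apply: a0; rewrite in_setU iU.
    by split => //; left; move=> i iU; apply: a0; rewrite in_setU iU orbT.
  - left; exists u => //; split => //.
    exists r0, (vzero n, vzero n); rewrite oplus0r; split.
      split; last exact: isu_meets (isu_r2 iu) uU'.
      left; split => //; split.
        by case=> _; apply/avoidP => i iU; apply: a0; rewrite in_setU iU.
      by case=> _; apply/avoidP; apply: (isu_av1 hd iu uU').
    split; first exact: cl_zero.
    split; first by move=> i iU; apply: a0; rewrite in_setU iU orbT.
    exact: isu_r2 iu.
have SC : State R U1 U2 F1 C.
  apply: (chain_lem hd hF1 hNI S0 c1) => i iU.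
  by rewrite (aC i iU) a0.
have [r2 c2 [e2 a2]] := fin_lem hd hF1 hNI hE1 hE2 SC.
exists r2 => //; split.
  by apply: cl_op => //; exact: cl_mono FR _.
split.
  by case=> _; apply/avoidP => i iU; rewrite e2 // aC.
by case=> _; apply/avoidP.
Qed.
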